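(* Let $n\ge 3$ and let $A=(a_{jk})$ be a real $n\times n$ matrix such that: (i) $A$ is symmetric; (ii) all off-diagonal entries of $A$ are non-positive; (iii) $A$ is irreducible, i.e. the simple graph on vertex set $\{1,\dots,n\}$ in which $j\neq k$ are adjacent if and only if $a_{jk}\neq 0$ is connected; (iv) $A\mathbf{1}=\mathbf{0}$, where $\mathbf{1}$ is the all-ones vector. Let $\mathbf{f}=(f_1,\dots,f_n)\in\mathbb{R}^n$ be arbitrary. For each $i\in\{1,\dots,n\}$ let $\mathbf{f}_i:=(f_1,\dots,f_{i-1},\,f_i-\mathbf{f}\cdot\mathbf{1},\,f_{i+1},\dots,f_n)$, and let $\mathbf{x}_i=(x_{i1},\dots,x_{in})$ be the unique solution of the linear system $A\mathbf{x}=\mathbf{f}_i$ satisfying $x_{ii}=0$. Then $$x_{12}+x_{23}+x_{31}=x_{21}+x_{32}+x_{13}.$$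
   Context: Under hypotheses (i)–(iv), $A$ is positive semidefinite of rank $n-1$ with kernel spanned by $\mathbf{1}$; since $\mathbf{f}_i\cdot\mathbf{1}=0$, the system $A\mathbf{x}=\mathbf{f}_i$ has a solution unique up to adding a multiple of $\mathbf{1}$, so the normalization $x_{ii}=0$ determines $\mathbf{x}_i$ uniquely. *)

(* Defs.v *)
From HB Require Import structures.
From mathcomp Require Import all_boot all_order all_algebra.
Set Implicit Arguments. Unset Strict Implicit. Unset Printing Implicit Defensive.
Import Order.TTheory GRing.Theory Num.Theory.
Local Open Scope ring_scope.

Definition mx_adj (R : ringType) (n : nat) (A : 'M[R]_n) : rel 'I_n :=
  fun j k => (j != k) && (A j k != 0).

Definition mx_irreducible (R : ringType) (n : nat) (A : 'M[R]_n) : Prop :=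
  forall j k : 'I_n, connect (mx_adj A) j k.

Definition ones (R : ringType) (n : nat) : 'cV[R]_n := const_mx 1.

Definition f_mod (R : ringType) (n : nat) (f : 'cV[R]_n) (i : 'I_n) : 'cV[R]_n :=
  \col_k (if k == i then f k 0 - \sum_(l < n) f l 0 else f k 0).

(* The indices 1, 2, 3 (0-based: 0, 1, 2) of 'I_n when 3 <= n. *)
Definition idx1 (n : nat) (hn : (3 <= n)%N) : 'I_n :=
  Ordinal (leq_trans (isT : (1 <= 3)%N) hn).
Definition idx2 (n : nat) (hn : (3 <= n)%N) : 'I_n :=
  Ordinal (leq_trans (isT : (2 <= 3)%N) hn).
Definition idx3 (n : nat) (hn : (3 <= n)%N) : 'I_n :=
  Ordinal hn.

(* Main.v *)
Require Import Defs.
From HB Require Import structures.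
From mathcomp Require Import all_boot all_order all_algebra.
From mathcomp Require Import ring lra.
Import Order.TTheory GRing.Theory Num.Theory.
Local Open Scope ring_scope.
Lemma kerlem (R : realFieldType) (n : nat) (i0 : 'I_n) (A : 'M[R]_n)
  (hoff : forall j k : 'I_n, j != k -> A j k <= 0)
  (hirr : mx_irreducible A)
  (hker : A *m ones R n = 0) (z : 'cV[R]_n) (hz : A *m z = 0) :
  forall j k, z j 0 = z k 0.
Proof.
have g0 : forall j, \sum_k A j k * (z j 0 - z k 0) = 0.
  move=> j.
  have h1 : \sum_k A j k = 0.
    have e := congr1 (fun M : 'cV[R]_n => M j 0) hker.
    rewrite /= mxE [in RHS]mxE in e; rewrite -[RHS]e.
    by apply: eq_bigr => k _; rewrite !mxE mulr1.
  have h2 : \sum_k A j k * z k 0 = 0.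
    have e := congr1 (fun M : 'cV[R]_n => M j 0) hz.
    by rewrite /= mxE [in RHS]mxE in e.
  under eq_bigr => k _ do rewrite mulrBr.
  by rewrite sumrB -mulr_suml h1 h2 mul0r subr0.
case: (@arg_maxP _ _ _ i0 xpredT (fun k => z k 0) isT) => m _ Hm.
have prop : forall u, z u 0 = z m 0 -> forall v, mx_adj A u v -> z v 0 = z m 0.
  move=> u hu v /andP [huv hA].
  have hle : forall k, A u k * (z u 0 - z k 0) <= 0.
    move=> k; case: (eqVneq u k) => [->|hk]; first by rewrite subrr mulr0.
    rewrite mulr_le0_ge0 // ?hoff // subr_ge0 hu; exact: Hm.
  have := g0 u.
  have : \sum_k - (A u k * (z u 0 - z k 0)) = 0.
    by rewrite sumrN g0 oppr0.
  move/eqP; rewrite psumr_eq0; last by move=> k _; rewrite oppr_ge0.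
  move/allP/(_ v (mem_index_enum v)) => /=.
  rewrite oppr_eq0 mulf_eq0 (negbTE hA) /= subr_eq0 => /eqP <- _ //.
have all_m : forall k, z k 0 = z m 0.
  move=> k; have /connectP [p hp ->] := hirr m k.
  have : z m 0 = z m 0 by [].
  move: {1 3 4}m hp => u.
  elim: p u => [|a p IH] u /=; first by [].
  move=> /andP [hua hp] hu; apply: IH => //; symmetry; exact: (prop u (esym hu) a hua).
move=> j k; by rewrite !all_m.
Qed.

Theorem mainTheorem1 (R : realFieldType) (n : nat) (hn : (3 <= n)%N)
  (A : 'M[R]_n)
  (hsym : A^T = A)
  (hoff : forall j k : 'I_n, j != k -> A j k <= 0)
  (hirr : mx_irreducible A)
  (hker : A *m ones R n = 0)
  (f : 'cV[R]_n)
  (x : 'I_n -> 'cV[R]_n)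
  (hx : forall i : 'I_n, A *m x i = f_mod f i)
  (hxii : forall i : 'I_n, x i i 0 = 0) :
  let i1 := idx1 hn in let i2 := idx2 hn in let i3 := idx3 hn in
  x i1 i2 0 + x i2 i3 0 + x i3 i1 0 = x i2 i1 0 + x i3 i2 0 + x i1 i3 0.
Proof.
move=> i1 i2 i3.
set S := \sum_(l < n) f l 0.
pose p i := \sum_k x i k 0 * f k 0.
have hq : forall i j, ((x j)^T *m (A *m x i)) 0 0 = p j - S * x j i 0.
  move=> i j; rewrite hx mxE /p.
  have -> : \sum_k (x j)^T 0 k * f_mod f i k 0
      = \sum_k (x j k 0 * f k 0 - (k == i)%:R * (S * x j k 0)).
    apply: eq_bigr => k _; rewrite !mxE; case: eqP => _ /=; rewrite -/S ?mul1r ?mul0r; ring.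
  rewrite sumrB [X in _ - X](bigD1 i) //= eqxx mul1r [X in S * _ + X]big1 ?addr0 // => k /negbTE ->; by rewrite mul0r.
have hs : forall i j, ((x j)^T *m (A *m x i)) 0 0 = ((x i)^T *m (A *m x j)) 0 0.
  move=> i j.
  have e : ((x j)^T *m A *m x i)^T = (x i)^T *m A *m x j.
    by rewrite !trmx_mul trmxK hsym mulmxA.
  by rewrite !mulmxA -e [RHS]mxE.
have key : forall i j, S * (x i j 0 - x j i 0) = p i - p j.
  move=> i j; have := hs i j; rewrite !hq; nra.
have [S0|Sn0] := eqVneq S 0.
  have hf : forall i j, f_mod f i = f_mod f j.
    move=> i j; apply/matrixP => a b; rewrite !mxE -/S S0 subr0.
    by case: ifP; case: ifP.
  have hd : forall i j k l, x i k 0 - x j k 0 = x i l 0 - x j l 0.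
    move=> i j k l.
    have := @kerlem R n i1 A hoff hirr hker (x i - x j) _ k l; rewrite !mxE; apply.
    by rewrite mulmxBr !hx (hf i j) subrr.
  have := hd i1 i2 i3 i2; have := hd i1 i3 i1 i3; have := hd i1 i2 i1 i2;
  have := hd i2 i3 i2 i3; rewrite !hxii; lra.
apply: (mulfI Sn0).
have := key i1 i2; have := key i2 i3; have := key i3 i1.
move=> a b c; rewrite !mulrDr.
move: a b c; rewrite !mulrBr; lra.
Qed.
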